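(* Let $(U,\tau_R,\rho)$ be a general ordered topological approximation space and $A\subseteq U$. Then $\underline{R}_{Inc}(A)\subseteq\underline{\alpha}_{Inc}(A)\subseteq\underline{S}_{Inc}(A)$ and $\underline{R}_{Dec}(A)\subseteq\underline{\alpha}_{Dec}(A)\subseteq\underline{S}_{Dec}(A)$.
   Context: A general ordered topological approximation space (GOTAS) is a triple $(U,\tau_R,\rho)$ where $U$ is a non-empty set, $R$ is a binary relation on $U$, $\tau_R$ is a topology on $U$ generated by $R$, and $\rho$ is a partial order on $U$. A subset $A\subseteq U$ is increasing (resp. decreasing) if whenever $a\in A$, $x\in U$ and $a\,\rho\,x$ (resp. $x\,\rho\,a$), then $x\in A$. For $A\subseteq U$: $\underline{R}_{Inc}(A)$ is the greatest subset of $A$ that is both $\tau_R$-open and increasing; $\underline{R}_{Dec}(A)$ is the greatest subset of $A$ that is $\tau_R$-open and decreasing; $\overline{R}^{Inc}(A)$ is the smallest superset of $A$ that is $\tau_R$-closed and increasing; $\overline{R}^{Dec}(A)$ is the smallest superset of $A$ that is $\tau_R$-closed and decreasing. Define $\underline{\alpha}_{Inc}(A)=A\cap\underline{R}_{Inc}(\overline{R}^{Inc}(\underline{R}_{Inc}(A)))$, $\underline{\alpha}_{Dec}(A)=A\cap\underline{R}_{Dec}(\overline{R}^{Dec}(\underline{R}_{Dec}(A)))$, $\underline{S}_{Inc}(A)=A\cap\overline{R}^{Inc}(\underline{R}_{Inc}(A))$, $\underline{S}_{Dec}(A)=A\cap\overline{R}^{Dec}(\underline{R}_{Dec}(A))$.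 *)

(* Defs.v *)
From Stdlib Require Import List.

Definition set (U : Type) := U -> Prop.
Definition subset {U} (A B : set U) : Prop := forall x, A x -> B x.
Definition setI {U} (A B : set U) : set U := fun x => A x /\ B x.

Definition afterset {U} (R : U -> U -> Prop) (x : U) : set U := fun y => R x y.

(* tau_R: the topology generated by the subbase {xR | x in U}:
   open sets are unions of finite intersections of after-sets
   (the empty intersection being U). *)
Definition finite_inter {U} (R : U -> U -> Prop) (l : list U) : set U :=
  fun y => forall x, In x l -> R x y.
Definition tauR_open {U} (R : U -> U -> Prop) (G : set U) : Prop :=
  forall y, G y -> exists l : list U, finite_inter R l y /\ subset (finite_inter R l) G.
Definition tauR_closed {U} (R : U -> U -> Prop) (F : set U) : Prop :=
  tauR_open R (fun x => ~ F x).

Definition partial_order {U} (rho : U -> U -> Prop) : Prop :=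
  (forall x, rho x x) /\ (forall x y, rho x y -> rho y x -> x = y) /\
  (forall x y z, rho x y -> rho y z -> rho x z).

Definition increasing {U} (rho : U -> U -> Prop) (A : set U) : Prop :=
  forall a x, A a -> rho a x -> A x.
Definition decreasing {U} (rho : U -> U -> Prop) (A : set U) : Prop :=
  forall a x, A a -> rho x a -> A x.

Definition lowInc {U} (R rho : U -> U -> Prop) (A : set U) : set U :=
  fun x => exists G, tauR_open R G /\ increasing rho G /\ subset G A /\ G x.
Definition lowDec {U} (R rho : U -> U -> Prop) (A : set U) : set U :=
  fun x => exists G, tauR_open R G /\ decreasing rho G /\ subset G A /\ G x.
Definition upInc {U} (R rho : U -> U -> Prop) (A : set U) : set U :=
  fun x => forall F, tauR_closed R F -> increasing rho F -> subset A F -> F x.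
Definition upDec {U} (R rho : U -> U -> Prop) (A : set U) : set U :=
  fun x => forall F, tauR_closed R F -> decreasing rho F -> subset A F -> F x.

Definition alphaInc {U} (R rho : U -> U -> Prop) (A : set U) : set U :=
  setI A (lowInc R rho (upInc R rho (lowInc R rho A))).
Definition alphaDec {U} (R rho : U -> U -> Prop) (A : set U) : set U :=
  setI A (lowDec R rho (upDec R rho (lowDec R rho A))).
Definition SInc {U} (R rho : U -> U -> Prop) (A : set U) : set U :=
  setI A (upInc R rho (lowInc R rho A)).
Definition SDec {U} (R rho : U -> U -> Prop) (A : set U) : set U :=
  setI A (upDec R rho (lowDec R rho A)).

(* Main.v *)
Require Import Defs.

Lemma low_sub {U} (R rho : U -> U -> Prop) A : subset (lowInc R rho A) A.
Proof. intros x [G [_ [_ [HG Gx]]]]. auto. Qed.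
Lemma lowD_sub {U} (R rho : U -> U -> Prop) A : subset (lowDec R rho A) A.
Proof. intros x [G [_ [_ [HG Gx]]]]. auto. Qed.

Theorem proposition3p12 (U : Type) (u0 : U) (R rho : U -> U -> Prop)
  (Hrho : partial_order rho) (A : set U) :
  (subset (lowInc R rho A) (alphaInc R rho A) /\ subset (alphaInc R rho A) (SInc R rho A)) /\
  (subset (lowDec R rho A) (alphaDec R rho A) /\ subset (alphaDec R rho A) (SDec R rho A)).
Proof.
  split; split.
  - intros x Hx. split. apply (low_sub R rho A x Hx).
    exists (lowInc R rho A). repeat split.
    + intros y [G [HGo [HGi [HGs Gy]]]].
      destruct (HGo y Gy) as [l [Hl Hs]]. exists l. split; auto.
      intros z Hz. exists G. auto.
    + intros a z [G [HGo [HGi [HGs Ga]]]] Haz. exists G. repeat split; eauto.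
    + intros y Hy F _ _ HF. auto.
    + exact Hx.
  - intros x [Ax Hx]. split; auto. apply (low_sub R rho _ x Hx).
  - intros x Hx. split. apply (lowD_sub R rho A x Hx).
    exists (lowDec R rho A). repeat split.
    + intros y [G [HGo [HGi [HGs Gy]]]].
      destruct (HGo y Gy) as [l [Hl Hs]]. exists l. split; auto.
      intros z Hz. exists G. auto.
    + intros a z [G [HGo [HGi [HGs Ga]]]] Haz. exists G. repeat split; eauto.
    + intros y Hy F _ _ HF. auto.
    + exact Hx.
  - intros x [Ax Hx]. split; auto. apply (lowD_sub R rho _ x Hx).
Qed.
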